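(* Let $G=(V,E)$ be a control flow graph and $p$ a predicate node. All successors of $p$ in $A_p$ belong to the same strongly connected component of $A_p$.
   Context: A control flow graph (CFG) is a finite directed graph $G=(V,E)$ in which every node has at most two outgoing edges; nodes with exactly two outgoing edges are predicate nodes. A path from $n_1$ is a nonempty finite or infinite sequence of nodes with each adjacent pair an edge; it is maximal if it is infinite or its last node has no successor. $V_p$ is the set of nodes occurring on all maximal paths from $p$ in $G$. For $V'\subseteq V$, a $V'$-interval from $x$ to $y$ is a finite path $n_1\ldots n_k$ in $G$ with $k\ge 2$, $n_1=x\in V'$, $n_k=y\in V'$, and $n_i\notin V'$ for $1<i<k$. $A_p$ is the directed graph with node set $V_p$ and an edge $(x,y)$ iff there is a $V_p$-interval from $x$ to $y$ in $G$. *)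

(* Defs.v *)
From mathcomp Require Import all_boot.
From Stdlib Require Import Relations.
Set Implicit Arguments. Unset Strict Implicit. Unset Printing Implicit Defensive.

Section CFG.
Variables (V : finType) (e : rel V).

Definition is_cfg : Prop := forall x : V, #|[set y | e x y]| <= 2.

Definition predicate_node (p : V) : Prop := #|[set y | e p y]| = 2.

(* A finite path from p is p :: s with path e p s; it is maximal iff its
   last node has no successor. *)
Definition max_finite_path (p : V) (s : seq V) : Prop :=
  path e p s /\ forall y, ~~ e (last p s) y.

(* An infinite path from p (infinite paths are always maximal). *)
Definition infinite_path (p : V) (f : nat -> V) : Prop :=
  f 0 = p /\ forall i, e (f i) (f i.+1).

Definition Vp (p x : V) : Prop :=
  (forall s, max_finite_path p s -> x \in p :: s) /\
  (forall f, infinite_path p f -> exists i, f i = x).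

Definition interval (W : V -> Prop) (x y : V) : Prop :=
  W x /\ W y /\
  exists s : seq V, path e x (rcons s y) /\ (forall n, n \in s -> ~ W n).

Definition Ap_edge (p x y : V) : Prop := Vp p x /\ Vp p y /\ interval (Vp p) x y.

Definition Ap_same_scc (p x y : V) : Prop :=
  Vp p x /\ Vp p y /\
  clos_refl_trans V (Ap_edge p) x y /\ clos_refl_trans V (Ap_edge p) y x.

End CFG.

(* Main.v *)
Require Import Defs.
From mathcomp Require Import all_boot.
From Stdlib Require Import Relations.
From Stdlib Require Import Classical.
From mathcomp Require Import zify.

Set Implicit Arguments. Unset Strict Implicit. Unset Printing Implicit Defensive.

Lemma fun_path (V : Type) (e : rel V) (f : nat -> V) i a :
  (forall j, j < i -> e (f j) (f j.+1)) -> a <= i ->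
  path e (f a) (map f (iota a.+1 (i - a))).
Proof.
move=> H; move Hk: (i - a) => k; elim: k a Hk => [|k IH] a Hk Hai //=.
apply/andP; split; first by apply: H; lia.
by apply: IH; lia.
Qed.

Lemma fun_mem (V : eqType) (f : nat -> V) i a :
  a <= i -> f i \in f a :: map f (iota a.+1 (i - a)).
Proof.
move=> Hai; rewrite in_cons; case: (ltngtP a i) Hai => // H _.
  by apply/orP; right; apply: map_f; rewrite mem_iota; lia.
by rewrite H eqxx.
Qed.

Lemma reach_along (V : finType) (e : rel V) p t : forall x s, Vp e p x ->
  path e x (s ++ t) -> (forall n, n \in s -> ~ Vp e p n) ->
  forall w, w \in t -> Vp e p w -> clos_refl_trans V (Ap_edge e p) x w.
Proof.
elim: t => [|a t IH] x s Hx Hp Hs w //.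
move=> Hw Vw.
move: (Hp); rewrite cat_path /= => /and3P [H1 H2 H3].
case: (classic (Vp e p a)) => Va.
  have Ea : Ap_edge e p x a.
    split; [done|split; [done|]]; split; [done|split; [done|]].
    by exists s; split; [rewrite rcons_path H1 H2|].
  move: Hw; rewrite in_cons => /orP [/eqP->|Hw]; first exact: rt_step.
  apply: rt_trans (rt_step _ _ _ _ Ea) (IH a [::] Va _ _ w Hw Vw) => //.
move: Hw; rewrite in_cons => /orP [/eqP Ew|Hw]; first by subst w.
apply: (IH x (rcons s a)) => //; first by rewrite cat_rcons.
by move=> n; rewrite mem_rcons in_cons => /orP [/eqP->|/Hs].
Qed.

Lemma last_iota_ a k : last a (iota a.+1 k) = a + k.
Proof. elim: k a => [|k IH] a /=; first by rewrite addn0. by rewrite IH addnS. Qed.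

Definition step (V : finType) (e : rel V) x := odflt x [pick z | e x z].

Definition walk (V : finType) (e : rel V) x0 pre n :=
  if n <= size pre then nth x0 (x0 :: pre) n
  else iter (n - size pre) (step e) (last x0 pre).

Lemma walkS (V : finType) (e : rel V) x0 pre n : size pre <= n ->
  walk e x0 pre n.+1 = step e (walk e x0 pre n).
Proof.
move=> Hn; rewrite /walk (leqNgt n.+1) ltnS Hn /=.
case: (leqP n (size pre)) => H.
  have -> : n = size pre by lia.
  rewrite subSnn /=.
  by rewrite -[X in nth _ _ X]/((size (x0 :: pre)).-1) nth_last.
by rewrite subSn.
Qed.

Lemma walk_edge (V : finType) (e : rel V) x0 pre j : path e x0 pre ->
  j < size pre -> e (walk e x0 pre j) (walk e x0 pre j.+1).
Proof.
move=> /(pathP x0) H Hj; rewrite /walk Hj ltnW //=.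
exact: H.
Qed.

Lemma walk0 (V : finType) (e : rel V) x0 pre : walk e x0 pre 0 = x0.
Proof. by []. Qed.

Lemma walk_hit (V : finType) (e : rel V) x0 pre t : path e x0 pre ->
  Vp e x0 t -> exists i, (forall j, j < i -> e (walk e x0 pre j) (walk e x0 pre j.+1))
                  /\ walk e x0 pre i = t.
Proof.
move=> Hpre [Hfin Hinf].
set w := walk e x0 pre.
case: (classic (forall n, e (w n) (w n.+1))) => Hall.
  have [i Hi] := Hinf w (conj (walk0 e x0 pre) Hall).
  by exists i; split.
have exP : exists n, (fun n => ~~ e (w n) (w n.+1)) n.
  apply: NNPP => Hn; apply: Hall => n; apply: negbNE; apply/negP => Hb.
  by apply: Hn; exists n.
case: (ex_minnP exP) => m Hm Hmin.
have Hlt : forall j, j < m -> e (w j) (w j.+1).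
  move=> j Hj; apply: negbNE; apply/negP => Hb.
  by have := Hmin j Hb; lia.
have Hsz : size pre <= m.
  rewrite leqNgt; apply/negP => Hs.
  by move: Hm; rewrite /w walk_edge.
have Hnosucc : forall y, ~~ e (w m) y.
  move=> y; apply/negP => Hy; move: Hm; rewrite /w walkS // /step.
  case: pickP => [z Hz|Hnone] /=; first by rewrite Hz.
  by move: (Hnone y); rewrite /= Hy.
have Hpath := fun_path Hlt (leq0n m).
have Hmax : max_finite_path e x0 [seq w i | i <- iota 1 (m - 0)].
  split; first by [].
  move=> y; rewrite -[X in last X _]/(w 0) -[1]/(0.+1).
  have -> : last (w 0) [seq w i | i <- iota 1 (m - 0)] = w m.
    rewrite last_map; congr w.
    by rewrite subn0 last_iota_.
  exact: Hnosucc.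
have := Hfin _ Hmax.
rewrite subn0 => Ht.
have : t \in map w (iota 0 m.+1) by [].
case/mapP => i Hi ->; exists i; split => // j Hj; apply: Hlt.
by move: Hi; rewrite mem_iota; lia.
Qed.

Fixpoint cycF (k n : nat) : nat :=
  match n with 0 => 0 | n'.+1 => if cycF k n' < k then (cycF k n').+1 else 0 end.

Lemma cycF_le k n : cycF k n <= k.
Proof. case: n => //= n; case: ifP => //. Qed.

Lemma cycle_only (V : finType) (e : rel V) p s y :
  path e p (rcons s p) -> (forall n, n \in s -> ~ Vp e p n) -> Vp e p y -> y = p.
Proof.
rewrite rcons_path => /andP [Hs Hl] Hn [Hf Hinf].
pose g n := nth p (p :: s) (cycF (size s) n).
have Hg : infinite_path e p g.
  split; first by [].
  move=> n; rewrite /g /=; case: ifP => H.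
    by move/(pathP p): Hs; apply.
  have -> : cycF (size s) n = (size (p :: s)).-1.
    by have := cycF_le (size s) n; move: H => /negbT; rewrite /=; lia.
  by rewrite nth_last.
have [i Hi] := Hinf g Hg.
have : y \in p :: s.
  by rewrite -Hi /g; apply: mem_nth; have := cycF_le (size s) i; rewrite /=; lia.
rewrite in_cons => /orP [/eqP //|Hy]; exfalso; exact: (Hn _ Hy (conj Hf Hinf)).
Qed.

Lemma main_reach (V : finType) (e : rel V) p s y t :
  Vp e p t -> t <> p -> path e p (rcons s y) ->
  (forall n, n \in s -> ~ Vp e p n) -> Vp e p y ->
  clos_refl_trans V (Ap_edge e p) y t.
Proof.
move=> Vt Htp Hpath Hs Vy.
have [i [Hlt Hi]] := walk_hit Hpath Vt.
case: (leqP i (size s)) => Hile.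
  exfalso; move: Hi; rewrite /walk size_rcons (leqW Hile) -rcons_cons nth_rcons /=.
  rewrite ltnS Hile => Ht.
  have : t \in p :: s by rewrite -Ht; apply: mem_nth; rewrite /=; lia.
  by rewrite in_cons => /orP [/eqP //|/Hs].
have Ha : size (rcons s y) <= i by rewrite size_rcons.
have Hwa : walk e p (rcons s y) (size (rcons s y)) = y.
  rewrite /walk leqnn.
  by rewrite -[X in nth _ _ X]/((size (p :: rcons s y)).-1) nth_last /= last_rcons.
have Hpp := fun_path Hlt Ha.
have Hm := fun_mem (walk e p (rcons s y)) Ha.
rewrite Hwa Hi in Hpp Hm.
move: Hm; rewrite in_cons => /orP [/eqP ->|Hm]; first exact: rt_refl.
exact: (@reach_along V e p _ y [::] Vy Hpp (fun n (H : n \in [::]) => ltac:(done)) t Hm Vt).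
Qed.

Theorem lemma4p7 (V : finType) (e : rel V) (p : V) :
  is_cfg e -> predicate_node e p ->
  forall y z : V, Ap_edge e p p y -> Ap_edge e p p z -> Ap_same_scc e p y z.
Proof.
move=> _ _ y z [_ [Vy [_ [_ [sy [Py Hsy]]]]]] [_ [Vz [_ [_ [sz [Pz Hsz]]]]]].
split; [done|split; [done|]].
case: (eqVneq y p) => [Eyp|Nyp].
  subst y; have -> := cycle_only Py Hsy Vz; split; exact: rt_refl.
case: (eqVneq z p) => [Ezp|Nzp].
  subst z; have -> := cycle_only Pz Hsz Vy; split; exact: rt_refl.
split.
  by apply: (main_reach Vz _ Py Hsy Vy); apply/eqP.
by apply: (main_reach Vy _ Pz Hsz Vz); apply/eqP.
Qed.
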